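(* For $D\in\mathbb N$ let $\Pi_D$ be the law of $f=D^{-1/2}\sum_{j=1}^DZ_j\varphi_j$ and let $\mathbb H_D$ be its RKHS. Then for any $\epsilon>0$, any $f_0\in\mathcal S^\beta(L)$ and any $D\ge(L/\epsilon)^{d/\beta}$, \[\inf_{h\in\mathbb H_D:\|h-f_0\|\le\epsilon}\|h\|_{\mathbb H_D}^2\le D\|f_0\|^2.\]
   Context: $G$ is a probability distribution on $\mathcal X\subseteq\mathbb R^d$, $\|\cdot\|$ the norm of $L^2(\mathcal X,G)$, $(\varphi_j)_{j\in\mathbb N}$ an orthonormal basis of $L^2(\mathcal X,G)$, $Z_j$ i.i.d. $\mathcal N(0,1)$, $\beta>0$, $L>0$. $\mathcal S^\beta(L)=\{g\in L^2(\mathcal X,G):\sum_j j^{2\beta/d}\langle g,\varphi_j\rangle^2\le L^2\}$. The RKHS $\mathbb H_D$ is the span of $\varphi_1,\dots,\varphi_D$ with norm $\|h\|_{\mathbb H_D}^2=D\sum_{j=1}^D\langle h,\varphi_j\rangle^2$. *)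

(* Defs.v *)
From HB Require Import structures.
From mathcomp Require Import all_boot all_order all_algebra.
From mathcomp Require Import all_classical all_reals all_analysis.
Set Implicit Arguments. Unset Strict Implicit. Unset Printing Implicit Defensive.
Import Order.TTheory GRing.Theory Num.Theory.
Local Open Scope classical_set_scope.
Local Open Scope ring_scope.

Section L2.
Context {dT : measure_display} {T : measurableType dT} {R : realType}.
Variable G : probability T R.

Definition inL2 (f : T -> R) : Prop :=
  measurable_fun setT f /\ G.-integrable setT (fun x => ((f x) ^+ 2)%:E).

Definition l2inner (f g : T -> R) : R := \int[G]_(x in setT) (f x * g x).

Definition l2norm (f : T -> R) : R := Num.sqrt (l2inner f f).

(* (phi_j)_j is an orthonormal basis of L^2(X, G).
   Index shift: phi j here is the paper's phi_{j+1}. *)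
Definition is_ONB (phi : nat -> T -> R) : Prop :=
  [/\ forall j, inL2 (phi j),
      forall i j, l2inner (phi i) (phi j) = (i == j)%:R
    & forall g, inL2 g -> (forall j, l2inner g (phi j) = 0) -> l2norm g = 0].

Definition sobolev_ball (phi : nat -> T -> R) (d : nat) (beta L : R)
    (g : T -> R) : Prop :=
  inL2 g /\
  (\sum_(0 <= j <oo)
     (((j.+1)%:R `^ (2 * beta / d%:R)) * (l2inner g (phi j)) ^+ 2)%:E
   <= (L ^+ 2)%:E)%E.

(* RKHS H_D = span(phi_1, ..., phi_D) *)
Definition inHD (phi : nat -> T -> R) (D : nat) (h : T -> R) : Prop :=
  exists a : nat -> R, h = (fun x => \sum_(j < D) a j * phi j x).

Definition HDnorm2 (phi : nat -> T -> R) (D : nat) (h : T -> R) : R :=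
  D%:R * \sum_(j < D) (l2inner h (phi j)) ^+ 2.

End L2.

(* Main.v *)
Require Import Defs.
From HB Require Import structures.
From mathcomp Require Import all_boot all_order all_algebra.
From mathcomp Require Import all_classical all_reals all_analysis.
From mathcomp Require Import ring lra.
Import Order.TTheory GRing.Theory Num.Theory.
Local Open Scope classical_set_scope.
Local Open Scope ring_scope.
Import measurable_realfun numFieldTopology.Exports numFieldNormedType.Exports.
Set Implicit Arguments. Unset Strict Implicit. Unset Printing Implicit Defensive.
Section L2lib.
Context {dT : measure_display} {T : measurableType dT} {R : realType}.
Variable G : probability T R.

Lemma L2_meas f : inL2 G f -> measurable_fun setT f.
Proof. by case. Qed.

Lemma L2_int f : inL2 G f -> G.-integrable setT (EFin \o (fun x => f x ^+ 2)).
Proof. by case. Qed.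

Lemma norm_prod_le (a b : R) : `|a * b| <= a ^+ 2 + b ^+ 2.
Proof.
rewrite normrM -[a ^+ 2]real_normK ?num_real // -[b ^+ 2]real_normK ?num_real //.
have ha := normr_ge0 a; have hb := normr_ge0 b.
set x := `|a| in ha *; set y := `|b| in hb *.
nra.
Qed.

Lemma L2_prod f g : inL2 G f -> inL2 G g ->
  G.-integrable setT (EFin \o (fun x => f x * g x)).
Proof.
move=> hf hg.
apply: (@le_integrable _ _ _ G setT measurableT _
   ((EFin \o (fun x => f x ^+ 2)) \+ (EFin \o (fun x => g x ^+ 2)))).
- apply/measurable_EFinP; apply: measurable_funM; exact: L2_meas.
- move=> x _ /=; rewrite lee_fin.
  by rewrite (ger0_norm (addr_ge0 (sqr_ge0 _) (sqr_ge0 _))) norm_prod_le.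
- by apply: (integrableD measurableT) => //; exact: L2_int.
Qed.

Lemma L2D f g : inL2 G f -> inL2 G g -> inL2 G (fun x => f x + g x).
Proof.
move=> hf hg; split.
  by apply: measurable_funD; exact: L2_meas.
apply: (@le_integrable _ _ _ G setT measurableT _
   (((EFin \o (fun x => f x ^+ 2)) \+ (EFin \o (fun x => g x ^+ 2))) \+
    (EFin \o (fun x => f x * g x)) \+ (EFin \o (fun x => f x * g x)))).
- apply/measurable_EFinP; apply: measurable_funX; apply: measurable_funD; exact: L2_meas.
- move=> x _ /=; rewrite lee_fin ger0_norm ?sqr_ge0 //; apply: le_trans (ler_norm _).
  by rewrite le_eqVlt; apply/orP; left; apply/eqP; ring.
- apply: (integrableD measurableT); [apply: (integrableD measurableT)|]; try apply: (integrableD measurableT);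
    (exact: L2_int || exact: L2_prod).
Qed.

Lemma L2Z a f : inL2 G f -> inL2 G (fun x => a * f x).
Proof.
move=> hf; split.
  by apply: measurable_funM => //; exact: L2_meas.
apply: (eq_integrable measurableT _ _ _ (integrableZl measurableT (a ^+ 2) (L2_int hf))).
by move=> x _ /=; rewrite -EFinM exprMn.
Qed.

Lemma L2_0 : inL2 G (fun _ => 0).
Proof.
split => //; apply: (eq_integrable measurableT _ _ _ (integrable0 _ _)).
by move=> x _ /=; rewrite expr0n.
Qed.


Local Notation ip := (l2inner G).

Lemma ipC f g : ip f g = ip g f.
Proof. by rewrite /l2inner; apply: eq_Rintegral => x _; rewrite mulrC. Qed.

Lemma ipDl f g h : inL2 G f -> inL2 G g -> inL2 G h ->
  ip (fun x => f x + g x) h = ip f h + ip g h.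
Proof.
move=> hf hg hh; rewrite /l2inner -RintegralD //; try exact: L2_prod.
by apply: eq_Rintegral => x _; rewrite mulrDl.
Qed.

Lemma ipBl f g h : inL2 G f -> inL2 G g -> inL2 G h ->
  ip (fun x => f x - g x) h = ip f h - ip g h.
Proof.
move=> hf hg hh; rewrite /l2inner -RintegralB //; try exact: L2_prod.
by apply: eq_Rintegral => x _; rewrite mulrBl.
Qed.

Lemma ipZl a f h : inL2 G f -> inL2 G h ->
  ip (fun x => a * f x) h = a * ip f h.
Proof.
move=> hf hh; rewrite /l2inner -RintegralZl //; last exact: L2_prod.
by apply: eq_Rintegral => x _; rewrite mulrA.
Qed.

Lemma ip0l h : ip (fun _ => 0) h = 0.
Proof.
rewrite /l2inner (@eq_Rintegral _ _ _ G _ (fun _ => 0)); last by move=> x _; rewrite mul0r.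
by rewrite Rintegral_cst // mul0r.
Qed.

Lemma ip_ge0 f : 0 <= ip f f.
Proof. by apply: Rintegral_ge0 => x _; rewrite -expr2 sqr_ge0. Qed.

Lemma L2B f g : inL2 G f -> inL2 G g -> inL2 G (fun x => f x - g x).
Proof.
move=> hf hg; have := L2D hf (L2Z (-1) hg).
by congr inL2; apply: funext => x; rewrite mulN1r.
Qed.

Lemma L2_sum n (F : nat -> T -> R) : (forall j, inL2 G (F j)) ->
  inL2 G (fun x => \sum_(j < n) F j x).
Proof.
move=> hF; elim: n => [|n ih].
  by have := L2_0; congr inL2; apply: funext => x; rewrite big_ord0.
have := L2D ih (hF n); congr inL2; apply: funext => x.
by rewrite big_ord_recr.
Qed.

Lemma ip_suml n (F : nat -> T -> R) h : (forall j, inL2 G (F j)) -> inL2 G h ->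
  ip (fun x => \sum_(j < n) F j x) h = \sum_(j < n) ip (F j) h.
Proof.
move=> hF hh; elim: n => [|n ih].
  by rewrite big_ord0 (_ : (fun x => _) = fun _ => 0) ?ip0l //; apply: funext => x; rewrite big_ord0.
rewrite big_ord_recr /= -ih -ipDl //; last exact: L2_sum.
by congr (l2inner G _ _); apply: funext => x; rewrite big_ord_recr.
Qed.

Lemma ip_expand a b u v : inL2 G u -> inL2 G v ->
  ip (fun x => a * u x + b * v x) (fun x => a * u x + b * v x) =
  a ^+ 2 * ip u u + 2 * a * b * ip u v + b ^+ 2 * ip v v.
Proof.
move=> hu hv.
have hau := L2Z a hu; have hbv := L2Z b hv; have hs := L2D hau hbv.
rewrite ipDl // ipZl // ipZl // [ip u _]ipC [ip v _]ipC !ipDl // !ipZl //.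
rewrite [ip v u]ipC; ring.
Qed.

Lemma cs_weak t u v : 0 < t -> inL2 G u -> inL2 G v ->
  2 * t * `|ip u v| <= t ^+ 2 * ip u u + ip v v.
Proof.
move=> t0 hu hv.
have h1 := ip_ge0 (fun x => t * u x + 1 * v x).
have h2 := ip_ge0 (fun x => t * u x + (-1) * v x).
rewrite ip_expand // in h1; rewrite ip_expand // in h2.
have [W0|W0] := lerP 0 (ip u v); [rewrite ger0_norm //| rewrite ltr0_norm //]; nra.
Qed.



Lemma cst_int k : G.-integrable setT (EFin \o cst k).
Proof. exact: finite_measure_integrable_cst. Qed.

Lemma L2_abs_int u : inL2 G u -> G.-integrable setT (EFin \o (fun x => `|u x|)).
Proof.
move=> hu.
apply: (@le_integrable _ _ _ G setT measurableT _
   ((EFin \o cst 1) \+ (EFin \o (fun x => u x ^+ 2)))).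
- apply/measurable_EFinP; apply: measurableT_comp => //; exact: L2_meas.
- move=> x _ /=; rewrite lee_fin normr_id.
  rewrite (ger0_norm (addr_ge0 ler01 (sqr_ge0 _))).
  rewrite -real_normK ?num_real //.
  have := normr_ge0 (u x); set y := `|u x|; nra.
- by apply: (integrableD measurableT); [exact: cst_int|exact: L2_int].
Qed.

Lemma L1_bound u a : 0 < a -> inL2 G u ->
  \int[G]_(x in setT) `|u x| <= a / 2 + (2 * a)^-1 * ip u u.
Proof.
move=> a0 hu.
have hi : G.-integrable setT (EFin \o (fun x => (2 * a)^-1 * (u x * u x))).
  apply: (eq_integrable measurableT _ _ _ (integrableZl measurableT ((2 * a)^-1) (L2_prod hu hu))).
  by move=> x _ /=; rewrite -EFinM.
apply: (@le_trans _ _ (\int[G]_(x in setT) (a / 2 + (2 * a)^-1 * (u x * u x)))).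
  apply: le_Rintegral => //; first exact: L2_abs_int.
    apply: (eq_integrable measurableT ((EFin \o cst (a / 2)) \+ (EFin \o (fun x => (2 * a)^-1 * (u x * u x))))).
      by move=> x _ /=; rewrite EFinD.
    by apply: (integrableD measurableT) => //; exact: cst_int.
  move=> x _.
  have -> : u x * u x = `|u x| * `|u x|.
    by rewrite -normrM ger0_norm // -expr2 sqr_ge0.
  have := normr_ge0 (u x); set y := `|u x| => y0.
  rewrite -subr_ge0.
  have -> : a / 2 + (2 * a)^-1 * (y * y) - y = (2 * a)^-1 * ((y - a) * (y - a)).
    by field; rewrite gt_eqF.
  by apply: mulr_ge0; [rewrite invr_ge0; nra | rewrite -expr2 sqr_ge0].
rewrite RintegralD //; [|exact: cst_int].
rewrite Rintegral_cst // (_ : fine _ = 1); last by apply: (congr1 fine (probability_setT G)).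
rewrite mulr1 RintegralZl //.
exact: L2_prod.
Qed.

Lemma Rint_EFin f : G.-integrable setT (EFin \o f) ->
  ((\int[G]_(x in setT) f x)%:E = \int[G]_(x in setT) (f x)%:E)%E.
Proof. by move=> hf; rewrite /Rintegral fineK //; exact: integrable_fin_num. Qed.

Section ONB.
Variable phi : nat -> T -> R.
Hypothesis hON : is_ONB G phi.

Lemma L2phi j : inL2 G (phi j).
Proof. by case: hON. Qed.

Lemma ipphi i j : ip (phi i) (phi j) = (i == j)%:R.
Proof. by case: hON. Qed.

Definition Sf (a : nat -> R) n := fun x => \sum_(j < n) a j * phi j x.

Lemma L2S a n : inL2 G (Sf a n).
Proof. by apply: (@L2_sum n (fun j x => a j * phi j x)) => j; apply: L2Z; exact: L2phi. Qed.

Lemma ipS_phi a n k : ip (Sf a n) (phi k) = if (k < n)%N then a k else 0.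
Proof.
rewrite /Sf (@ip_suml n (fun j x => a j * phi j x)); last exact: L2phi; last first.
  by move=> j; apply: L2Z; exact: L2phi.
rewrite (eq_bigr (fun j : 'I_n => a j * ((j : nat) == k)%:R)); last by move=> j _; rewrite ipZl ?ipphi //; exact: L2phi.
elim: n => [|n ih]; first by rewrite big_ord0.
rewrite big_ord_recr /= ih ltnS [(k <= n)%N]leq_eqVlt.
have [->|nk] := eqVneq k n; first by rewrite ltnn /= add0r mulr1.
by rewrite /= mulr0 addr0.
Qed.

Lemma ipSS a b n m : (n <= m)%N ->
  ip (Sf a m) (Sf b n) = \sum_(j < n) a j * b j.
Proof.
move=> nm; rewrite ipC /Sf (@ip_suml n (fun j x => b j * phi j x)); last exact: L2S; last first.
  by move=> j; apply: L2Z; exact: L2phi.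
apply: eq_bigr => j _; rewrite ipZl; [|exact: L2phi|exact: L2S].
by rewrite ipC ipS_phi (leq_trans (ltn_ord j) nm) mulrC.
Qed.


Lemma ip_sub u v : inL2 G u -> inL2 G v ->
  ip (fun x => u x - v x) (fun x => u x - v x) = ip u u - 2 * ip u v + ip v v.
Proof.
move=> hu hv.
have -> : (fun x => u x - v x) = (fun x => 1 * u x + (-1) * v x).
  by apply: funext => x; rewrite mul1r mulN1r.
rewrite ip_expand //; ring.
Qed.

Section F0.
Variable f0 : T -> R.
Hypothesis hf0 : inL2 G f0.

Definition cf j := ip f0 (phi j).
Definition Pf n := \sum_(j < n) cf j ^+ 2.

Lemma ipfS n : ip f0 (Sf cf n) = Pf n.
Proof.
rewrite ipC /Sf (@ip_suml n (fun j x => cf j * phi j x)) //; last first.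
  by move=> j; apply: L2Z; exact: L2phi.
apply: eq_bigr => j _; rewrite ipZl //; last exact: L2phi.
by rewrite ipC expr2.
Qed.

Lemma ipSSP n m : (n <= m)%N -> ip (Sf cf m) (Sf cf n) = Pf n.
Proof. by move=> nm; rewrite ipSS //; apply: eq_bigr => j _; rewrite expr2. Qed.

Lemma bessel n : Pf n <= ip f0 f0.
Proof.
have := ip_ge0 (fun x => f0 x - Sf cf n x).
rewrite ip_sub //; last exact: L2S.
rewrite ipfS ipSSP //; lra.
Qed.

Lemma Pf_ge0 n : 0 <= Pf n.
Proof. by apply: sumr_ge0 => j _; exact: sqr_ge0. Qed.

Lemma Pf_mono n m : (n <= m)%N -> Pf n <= Pf m.
Proof.
move=> nm; rewrite /Pf -(subnKC nm).
elim: (m - n)%N => [|k ih]; first by rewrite addn0.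
by rewrite addnS big_ord_recr /= (le_trans ih) // lerDl sqr_ge0.
Qed.

Lemma Pf_diff n m : (n <= m)%N ->
  ip (fun x => Sf cf m x - Sf cf n x) (fun x => Sf cf m x - Sf cf n x) = Pf m - Pf n.
Proof.
move=> nm; rewrite ip_sub; [|exact: L2S|exact: L2S].
rewrite (ipSSP nm) (ipSSP (leqnn m)) (ipSSP (leqnn n)); lra.
Qed.

Lemma Pf_tail (e : R) : 0 < e -> exists N, forall M, (N <= M)%N -> Pf M - Pf N <= e.
Proof.
move=> e0.
have hs : has_sup (range Pf).
  split; first by exists (Pf 0), 0%N.
  by exists (ip f0 f0) => _ [n _ <-]; exact: bessel.
have [_ [N _ <-] hN] := sup_adherent e0 hs.
exists N => M _.
have : Pf M <= sup (range Pf) by apply: sup_upper_bound => //; exists M.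
lra.
Qed.


Definition ak (k : nat) : R := (2^-1) ^+ k.
Definition del (k : nat) : R := ak k ^+ 3.

Lemma ak_gt0 k : 0 < ak k.
Proof. by rewrite /ak exprn_gt0 // invr_gt0. Qed.

Lemma ak_le1 k : ak k <= 1.
Proof. by apply: exprn_ile1; [rewrite invr_ge0 | rewrite invf_le1 // ler1n]. Qed.

Lemma ak_sum n : \sum_(k < n) ak k + 2 * ak n = 2.
Proof.
elim: n => [|n ih]; first by rewrite big_ord0 /ak expr0 add0r mulr1.
rewrite big_ord_recr /= -[RHS]ih -addrA; congr (_ + _); rewrite /ak exprS; by field.
Qed.

Section Seq.
Variable Nf : nat -> nat.
Hypothesis hNf : forall k M, (Nf k <= M)%N -> Pf M - Pf (Nf k) <= del k.

Definition Nn k := \sum_(i < k.+1) (Nf i).+1.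

Lemma Nn_S k : Nn k.+1 = (Nn k + (Nf k.+1).+1)%N.
Proof. by rewrite /Nn big_ord_recr. Qed.

Lemma Nn_mono : {homo Nn : m n / (m <= n)%N}.
Proof. by apply: homo_leq => [//|y x z|n]; [exact: leq_trans|rewrite Nn_S leq_addr]. Qed.

Lemma Nn_geNf k : (Nf k <= Nn k)%N.
Proof. case: k => [|k]; first by rewrite /Nn big_ord1. by rewrite Nn_S (leq_trans (leqnSn _) (leq_addl _ _)). Qed.

Lemma Nn_gek k : (k < Nn k)%N.
Proof.
elim: k => [|k ih]; first by rewrite /Nn big_ord1.
by rewrite Nn_S addnS ltnS (leq_trans ih) // leq_addr.
Qed.

Lemma tailN k M : (Nn k <= M)%N -> Pf M - Pf (Nn k) <= del k.
Proof.
move=> kM; have := hNf (leq_trans (Nn_geNf k) kM).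
have := Pf_mono (Nn_geNf k); lra.
Qed.

Definition Sk k := Sf cf (Nn k).

Lemma L2Sk k : inL2 G (Sk k).
Proof. exact: L2S. Qed.

Definition dk k x := `|Sk k.+1 x - Sk k x|.

Lemma dk_int k : G.-integrable setT (EFin \o dk k).
Proof. by apply: L2_abs_int; apply: L2B; exact: L2Sk. Qed.

Lemma dk_meas k : measurable_fun setT (dk k).
Proof.
apply: measurableT_comp => //; apply: measurable_funB; apply: L2_meas; exact: L2Sk.
Qed.

Lemma dk_bound k : \int[G]_(x in setT) dk k x <= ak k.
Proof.
have hu : inL2 G (fun x => Sk k.+1 x - Sk k x) by apply: L2B; exact: L2Sk.
rewrite /dk; apply: le_trans (@L1_bound _ _ (ak_gt0 k) hu) _.
rewrite /Sk Pf_diff; last exact: Nn_mono.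
have := tailN (Nn_mono (leqnSn k)); rewrite -/(Sk k) /del => h.
have a0 := ak_gt0 k; have a1 := ak_le1 k.
have h2 : (2 * ak k)^-1 * (Pf (Nn k.+1) - Pf (Nn k)) <= (2 * ak k)^-1 * ak k ^+ 3.
  by rewrite ler_wpM2l // invr_ge0; nra.
apply: le_trans (lerD (lexx _) h2) _.
have -> : (2 * ak k)^-1 * ak k ^+ 3 = ak k ^+ 2 / 2 by field; rewrite gt_eqF.
nra.
Qed.

Definition Fs x := (\sum_(k <oo) (dk k x)%:E)%E.

Lemma Fs_meas : measurable_fun setT Fs.
Proof.
apply: (@ge0_emeasurable_sum _ _ _ setT (fun k x => (dk k x)%:E) xpredT).
  by move=> k x _ _; rewrite lee_fin normr_ge0.
by move=> k _; apply/measurable_EFinP; exact: dk_meas.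
Qed.

Lemma Fs_int : G.-integrable setT Fs.
Proof.
apply/integrableP; split; first exact: Fs_meas.
have Fs0 x : (0 <= Fs x)%E by apply: nneseries_ge0 => k _ _; rewrite lee_fin normr_ge0.
rewrite (eq_integral Fs); last by move=> x _; rewrite gee0_abs.
rewrite /Fs integral_nneseries //; last first.
  by move=> k x _; rewrite lee_fin normr_ge0.
  by move=> k; apply/measurable_EFinP; exact: dk_meas.
apply: (@le_lt_trans _ _ 2%:E); last exact: ltry.
apply: lime_le; first by apply: is_cvg_nneseries => k _ _; apply: integral_ge0 => x _; rewrite lee_fin normr_ge0.
apply: nearW => n /=.
apply: (@le_trans _ _ (\sum_(0 <= k < n) (ak k)%:E)%E).
  apply: lee_sum => k _; rewrite -Rint_EFin; last exact: dk_int.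
  by rewrite lee_fin dk_bound.
rewrite sumEFin lee_fin big_mkord -(ak_sum n) lerDl.
by apply: mulr_ge0 => //; exact: ltW (ak_gt0 n).
Qed.


Lemma Fs_ae : exists N, [/\ measurable N, G N = 0%E & forall x, ~ N x -> (Fs x < +oo)%E].
Proof.
have [N [mN N0 sub]] := integrable_ae measurableT Fs_int.
exists N; split => // x nNx.
have Fs0 : (0 <= Fs x)%E by apply: nneseries_ge0 => k _ _; rewrite lee_fin normr_ge0.
rewrite -ge0_fin_numE //.
apply: contrapT => hx; apply: nNx; apply: sub => /=.
by move=> h; apply: hx; exact: h.
Qed.

Section Null.
Variable N : set T.
Hypotheses (mN : measurable N) (N0 : G N = 0%E) (hN : forall x, ~ N x -> (Fs x < +oo)%E).

Lemma Sk_cvg x : ~ N x -> cvgn (fun k => Sk k x).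
Proof.
move=> nNx.
pose u : R ^nat := fun k => Sk k.+1 x - Sk k x.
have hu : cvgn (series u).
  apply: normed_cvg.
  apply: (@nnseries_is_cvg _ (fun k => `|u k|)) => //.
  exact: hN.
have -> : (fun k => Sk k x) = (fun k => Sk 0 x + series u k).
  apply: funext => k; rewrite /series /= telescope_sumr //.
  by rewrite addrC subrK.
apply: is_cvgD => //; exact: is_cvg_cst.
Qed.

Definition gf x := limn (fun k => \1_(~` N) x * Sk k x).

Lemma v_cvg x : (fun k => \1_(~` N) x * Sk k x) @ \oo --> gf x.
Proof.
rewrite indicE; have [xN|xN] := boolP (x \in ~` N).
  rewrite /gf indicE xN.
  have : cvgn (fun k => Sk k x) by apply: Sk_cvg; move: xN; rewrite inE.
  by move=> h; apply: is_cvgM => //; exact: is_cvg_cst.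
rewrite /gf indicE (negbTE xN).
have -> : (fun k => 0%:R * Sk k x) = fun _ => 0 by apply: funext => k; rewrite mul0r.
exact: is_cvg_cst.
Qed.

Lemma g_meas : measurable_fun setT gf.
Proof.
apply: (@measurable_fun_cvg _ _ _ setT (fun k x => \1_(~` N) x * Sk k x)).
  move=> m; apply: measurable_funM; first by apply: measurable_indic; exact: measurableC.
  exact: L2_meas (L2Sk m).
by move=> x _; exact: v_cvg.
Qed.

Lemma g_lim x : ~ N x -> (fun k => Sk k x) @ \oo --> gf x.
Proof.
move=> nNx; have := @v_cvg x.
have -> : (fun k => \1_(~` N) x * Sk k x) = (fun k => Sk k x); last by [].
by apply: funext => k; rewrite indicE mem_set // mul1r.
Qed.


Lemma fatou_bound h B m0 : inL2 G h ->
  (forall m, (m0 <= m)%N -> ip (fun x => Sk m x - h x) (fun x => Sk m x - h x) <= B) ->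
  inL2 G (fun x => gf x - h x) /\ ip (fun x => gf x - h x) (fun x => gf x - h x) <= B.
Proof.
move=> hh hB.
have mw : measurable_fun setT (fun x => gf x - h x).
  by apply: measurable_funB; [exact: g_meas | exact: L2_meas].
have mww : measurable_fun setT (EFin \o (fun x => (gf x - h x) * (gf x - h x))).
  by apply/measurable_EFinP; exact: measurable_funM.
pose f_ := fun m x => (((Sk m x - h x) * (Sk m x - h x))%:E)%E.
have mf m : measurable_fun setT (f_ m).
  apply/measurable_EFinP; have : measurable_fun setT (fun x => Sk m x - h x).
    by apply: measurable_funB; apply: L2_meas => //; exact: L2Sk.
  by move=> hm; exact: measurable_funM.
have f0_ m x : (0 <= f_ m x)%E by rewrite lee_fin -expr2 sqr_ge0.
have key : (\int[G]_(x in setT) (((gf x - h x) * (gf x - h x))%:E) <= B%:E)%E.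
  rewrite (ge0_negligible_integral mN measurableT mww) //; last first.
    by move=> x _; rewrite lee_fin -expr2 sqr_ge0.
  rewrite (eq_integral (fun x => limn_einf (f_ ^~ x))); last first.
    move=> x; rewrite inE => -[_ /= nNx].
    symmetry; apply: (cvg_limn_einf_sup _).1.
    apply: cvg_EFin; first exact: nearW.
    by apply: cvgM; apply: cvgB => //; [exact: g_lim | exact: cvg_cst | exact: g_lim | exact: cvg_cst].
  apply: le_trans (fatou _ _ _ _) _.
  - exact: measurableD.
  - by move=> m; exact: measurable_funS (mf m).
  - by move=> m x _; exact: f0_.
  rewrite limn_einf_lim; apply: lime_le; first exact: is_cvg_einfs.
  exists m0 => // n /= m0n.
  apply: (@le_trans _ _ (\int[G]_(x in setT `\` N) f_ n x)%E).
    by apply: ereal_inf_lbound; exists n => /=.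
  apply: le_trans (ge0_subset_integral _ _ _ _ _ _) _.
  - exact: measurableD.
  - exact: measurableT.
  - exact: mf.
  - by move=> x _; exact: f0_.
  - by [].
  rewrite /f_ -Rint_EFin ?lee_fin; first exact: hB.
  by apply: L2_prod; apply: L2B => //; exact: L2Sk.
have hint : G.-integrable setT (EFin \o (fun x => (gf x - h x) * (gf x - h x))).
  apply/integrableP; split => //.
  rewrite (eq_integral (fun x => ((gf x - h x) * (gf x - h x))%:E)); last first.
    by move=> x _ /=; rewrite ger0_norm // -expr2 sqr_ge0.
  exact: le_lt_trans key (ltry _).
have hL2 : inL2 G (fun x => gf x - h x).
  split => //; apply: (eq_integrable measurableT _ _ _ hint) => x _ /=.
split => //.
rewrite -lee_fin /l2inner Rint_EFin //.
Qed.

Lemma g_L2 : inL2 G gf.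
Proof.
have hB : forall m, (0 <= m)%N ->
    ip (fun x => Sk m x - 0) (fun x => Sk m x - 0) <= ip f0 f0.
  move=> m _.
  have -> : (fun x => Sk m x - 0) = Sk m by apply: funext => x; rewrite subr0.
  by rewrite /Sk ipSSP //; exact: bessel.
have [h _] := fatou_bound L2_0 hB.
by move: h; congr inL2; apply: funext => x; rewrite subr0.
Qed.

Lemma ak_cvg : ak @ \oo --> 0.
Proof.
rewrite /ak; apply: cvg_expr.
by rewrite ger0_norm ?invr_ge0 // invf_lt1 // ltr1n.
Qed.

Lemma g_coef j : ip gf (phi j) = cf j.
Proof.
have H k : (j < k)%N -> `|ip gf (phi j) - cf j| <= ak k.
  move=> jk.
  have hB : forall m, (k <= m)%N ->
      ip (fun x => Sk m x - Sk k x) (fun x => Sk m x - Sk k x) <= del k.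
    move=> m km; rewrite /Sk Pf_diff; last exact: Nn_mono.
    exact: tailN (Nn_mono km).
  have [hL hb] := fatou_bound (L2Sk k) hB.
  have e : ip (fun x => gf x - Sk k x) (phi j) = ip gf (phi j) - cf j.
    rewrite ipBl //; [|exact: g_L2|exact: L2Sk|exact: L2phi].
    by rewrite /Sk ipS_phi (leq_trans jk (ltnW (Nn_gek k))).
  have := cs_weak (ak_gt0 k) (L2phi j) hL.
  rewrite ipphi eqxx mulr1 ipC e.
  move: hb; rewrite /del.
  move: (ak_gt0 k) (ak_le1 k) (normr_ge0 (ip gf (phi j) - cf j)).
  move: (ak k) `|ip gf (phi j) - cf j| (ip (fun x => gf x - Sk k x) (fun x => gf x - Sk k x)).
  move=> a w q a0 a1 w0 hq h.
  have h2 : 2 * a * w <= 2 * a * a by nra.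
  by rewrite ler_pM2l in h2; nra.
have : `|ip gf (phi j) - cf j| <= limn ak.
  apply: limr_ge; first by apply/cvg_ex; exists 0; exact: ak_cvg.
  by exists j.+1 => // k /= jk; exact: H.
rewrite (cvg_lim _ ak_cvg) // normr_le0 subr_eq0 => /eqP //.
Qed.

Lemma tail_bound D e : (forall M, (D <= M)%N -> Pf M - Pf D <= e) ->
  ip (fun x => f0 x - Sf cf D x) (fun x => f0 x - Sf cf D x) <= e.
Proof.
move=> hD.
have La : inL2 G (fun x => f0 x - gf x) by apply: L2B => //; exact: g_L2.
have aa : ip (fun x => f0 x - gf x) (fun x => f0 x - gf x) = 0.
  have : l2norm G (fun x => f0 x - gf x) = 0.
    case: hON => _ _; apply => // j.
    rewrite ipBl //; [|exact: g_L2|exact: L2phi].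
    by rewrite g_coef subrr.
  rewrite /l2norm => /eqP; rewrite sqrtr_eq0 => h.
  by apply/eqP; rewrite eq_le h ip_ge0.
have hB : forall m, (D <= m)%N ->
    ip (fun x => Sk m x - Sf cf D x) (fun x => Sk m x - Sf cf D x) <= e.
  move=> m km.
  have Dm : (D <= Nn m)%N by rewrite (leq_trans km) // ltnW // Nn_gek.
  rewrite /Sk Pf_diff //; exact: hD.
have [Lb bb] := fatou_bound (L2S _ _) hB.
have -> : (fun x => f0 x - Sf cf D x) = (fun x => 1 * (f0 x - gf x) + 1 * (gf x - Sf cf D x)).
  by apply: funext => x; rewrite !mul1r addrA subrK.
rewrite ip_expand // aa.
have ab : ip (fun x => f0 x - gf x) (fun x => gf x - Sf cf D x) = 0.
  set W := ip _ _; set V := ip (fun x => gf x - Sf cf D x) _ in bb *.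
  apply/eqP; rewrite -normr_eq0; apply/negPn/negP => W0.
  have Wp : 0 < `|W| by rewrite lt_def W0 normr_ge0.
  have V0 : 0 <= V by exact: ip_ge0.
  have t0 : 0 < (V + 1) / (2 * `|W|).
    by apply: divr_gt0; [lra | rewrite mulr_gt0].
  have := cs_weak t0 La Lb; rewrite aa mulr0 add0r -/W -/V.
  have -> : 2 * ((V + 1) / (2 * `|W|)) * `|W| = V + 1.
    by field; rewrite gt_eqF.
  lra.
by rewrite ab expr1n; lra.
Qed.
End Null.
End Seq.

Lemma parseval_tail D e : (forall M, (D <= M)%N -> Pf M - Pf D <= e) ->
  ip (fun x => f0 x - Sf cf D x) (fun x => f0 x - Sf cf D x) <= e.
Proof.
move=> hD.
have : forall k, exists N, forall M, (N <= M)%N -> Pf M - Pf N <= del k.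
  by move=> k; apply: Pf_tail; rewrite /del exprn_gt0 // ak_gt0.
move/choice => [Nf hNf].
have [N [mN N0 hN]] := Fs_ae hNf.
exact: (tail_bound hNf mN N0 hN hD).
Qed.

Lemma Pf_split D M : (D <= M)%N -> Pf M - Pf D = \sum_(D <= j < M) cf j ^+ 2.
Proof.
move=> DM; rewrite /Pf -!(big_mkord xpredT (fun j => cf j ^+ 2)).
by rewrite (big_cat_nat (leq0n D) DM) /= addrC addrK.
Qed.
End F0.
End ONB.

End L2lib.

Unset Implicit Arguments.

Theorem lemma11 (dT : measure_display) (T : measurableType dT) (R : realType)
    (G : probability T R) (phi : nat -> T -> R) (d : nat) (beta L : R)
    (eps : R) (f0 : T -> R) (D : nat) :
  (0 < d)%N -> 0 < beta -> 0 < L ->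
  is_ONB G phi ->
  0 < eps ->
  sobolev_ball G phi d beta L f0 ->
  (L / eps) `^ (d%:R / beta) <= D%:R ->
  (ereal_inf [set (HDnorm2 G phi D h)%:E | h in
                [set h | inHD phi D h /\ (l2norm G (fun x => h x - f0 x) <= eps)%R]]
   <= (D%:R * (l2norm G f0) ^+ 2)%:E)%E.
Proof.
move=> d0 b0 L0 hON e0 [hf0 hsob] hD.
set c := cf G phi f0.
set w := fun j : nat => (j.+1)%:R `^ (2 * beta / d%:R).
have dR : (0 < d%:R :> R) by rewrite ltr0n.
have ex0 : 0 <= 2 * beta / d%:R by apply: divr_ge0; [nra | exact: ltW].
have hpart M : \sum_(0 <= j < M) w j * c j ^+ 2 <= L ^+ 2.
  rewrite -lee_fin -sumEFin; apply: le_trans hsob.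
  apply: (@nneseries_lim_ge _ (fun j => (w j * c j ^+ 2)%:E) xpredT 0%N M).
  by move=> n _ _; rewrite lee_fin mulr_ge0 ?powR_ge0 ?sqr_ge0.
set K := w D.
have K0 : 0 < K by rewrite /K /w powR_gt0 // ltr0n.
have hK : (L / eps) ^+ 2 <= K.
  have h1 : (L / eps) `^ (d%:R / beta) <= D.+1%:R.
    by apply: le_trans hD _; rewrite ler_nat.
  have := ge0_ler_powR ex0 _ _ h1.
  rewrite !nnegrE powR_ge0 ler0n => /(_ isT isT).
  rewrite -powRrM (_ : d%:R / beta * (2 * beta / d%:R) = 2%:R); last first.
    by field; apply/andP; split; rewrite gt_eqF.
  by rewrite powR_mulrn // divr_ge0 // ltW.
have htail M : (D <= M)%N -> Pf G phi f0 M - Pf G phi f0 D <= eps ^+ 2.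
  move=> DM; rewrite Pf_split //.
  have h1 : K * \sum_(D <= j < M) c j ^+ 2 <= L ^+ 2.
    apply: le_trans (hpart M); rewrite mulr_sumr.
    rewrite (big_cat_nat (leq0n D) DM) /= -[X in X <= _]add0r.
    apply: lerD; first by apply: sumr_ge0 => j _; rewrite mulr_ge0 ?powR_ge0 ?sqr_ge0.
    rewrite big_nat_cond [X in _ <= X]big_nat_cond; apply: ler_sum => j /andP[/andP[Dj _] _].
    apply: ler_wpM2r; first exact: sqr_ge0.
    rewrite /K /w; apply: ge0_ler_powR => //; rewrite ?nnegrE ?ler0n // ler_nat ltnS.
    exact: Dj.
  have h2 : L ^+ 2 <= K * eps ^+ 2.
    by rewrite -ler_pdivrMr ?exprn_gt0 // -expr_div_n.
  have hs0 : 0 <= \sum_(D <= j < M) c j ^+ 2 by apply: sumr_ge0 => j _; exact: sqr_ge0.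
  rewrite -(ler_pM2l K0); exact: le_trans h1 h2.
have hpar := parseval_tail hON hf0 htail.
apply: (@le_trans _ _ (HDnorm2 G phi D (Sf phi c D))%:E).
  apply: ereal_inf_lbound; exists (Sf phi c D) => //; split.
    by exists c.
  rewrite /l2norm -(ger0_norm (ltW e0)) -sqrtr_sqr ler_sqrt ?sqr_ge0 //.
  apply: le_trans hpar; rewrite le_eqVlt; apply/orP; left; apply/eqP.
  by rewrite /l2inner; apply: eq_Rintegral => x _; ring.
rewrite lee_fin /HDnorm2 ler_wpM2l // /l2norm sqr_sqrtr ?ip_ge0 //.
apply: le_trans (bessel hON hf0 D).
rewrite le_eqVlt; apply/orP; left; apply/eqP; apply: eq_bigr => j _.
by rewrite ipS_phi // ltn_ord.
Qed.
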